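(* Let $n\ge2$ and let $T_n(t)=\sum_{m=1}^n(a_m\cos mt+b_m\sin mt)$ with $a_m,b_m\in\mathbb{R}$. For $\nu\in\{1,\dots,n\}$, let $t_1,\dots,t_{2n+1}\in[0,2\pi)$ be the arguments of the $2n+1$ roots of the polynomial $s_n(z)+z^{2n+1}s_n(1/z)$, where $s_n(z)=\sum_{j=0}^{\lfloor n/\nu\rfloor}\frac{(-z^\nu)^j}{\nu^jj!}$. Then \[a_\nu=\sum_{k=1}^{2n+1}T_n(-t_k),\qquad b_\nu=\sum_{k=1}^{2n+1}T_n\!\left(\frac{\pi}{2\nu}-t_k\right),\qquad\nu=1,\dots,n.\] *)

(* Defs.v *)
From mathcomp Require Import all_boot all_order all_algebra.
From mathcomp Require Import reals trigo.
Import GRing.Theory Num.Theory Order.TTheory.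
From mathcomp Require Export complex.

Set Implicit Arguments.
Unset Strict Implicit.
Unset Printing Implicit Defensive.

Local Open Scope ring_scope.
Local Open Scope complex_scope.

Definition trigpoly (R : realType) (n : nat) (a b : nat -> R) (t : R) : R :=
  \sum_(1 <= m < n.+1) (a m * cos (m%:R * t) + b m * sin (m%:R * t)).

Definition s_poly (R : realType) (n nu : nat) : {poly R[i]} :=
  \sum_(j < (n %/ nu).+1)
     ((- 'X^nu) ^+ j * ((nu%:R ^+ j * (j`!)%:R)^-1 : R[i])%:P).

(* z^d p(1/z), as a polynomial (valid when deg p <= d):
   sum_i p_i z^(d - i) *)
Definition recip_poly (R : realType) (d : nat) (p : {poly R[i]}) : {poly R[i]} :=
  \sum_(i < size p) p`_i *: 'X^(d - i).

Definition key_poly (R : realType) (n nu : nat) : {poly R[i]} :=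
  s_poly R n nu + recip_poly (2 * n).+1 (s_poly R n nu).

(* Main.v *)
Require Import Defs.
From mathcomp Require Import all_boot all_order all_algebra.
From mathcomp Require Import reals trigo.
Import GRing.Theory Num.Theory Order.TTheory.
From mathcomp Require Import complex.
From mathcomp Require Import ring zify.
Local Open Scope ring_scope.

Section EK.
Variable F : numDomainType.

Definition HH (a : nat -> F) (y : F) N := \sum_(j < N) (a j - a j.+1) * y ^+ j.+1.

Lemma ek_ident (a : nat -> F) y N :
  (1 - y) * \sum_(j < N.+1) a j * y ^+ j = a 0%N - HH a y N - a N * y ^+ N.+1.
Proof.
elim: N => [|N IH].
  by rewrite big_ord1 /HH big_ord0 expr0 expr1; ring.
rewrite big_ord_recr /= mulrDr IH /HH big_ord_recr /= -/(HH a y N).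
rewrite !exprS; ring.
Qed.

Lemma ek_bound (a : nat -> F) y N : (forall j, 0 <= a j.+1 <= a j) -> `|y| <= 1 ->
  `|HH a y N| <= `|y| * (a 0%N - a N).
Proof.
move=> ha hy; elim: N => [|N IH].
  by rewrite /HH big_ord0 normr0 subrr mulr0.
rewrite /HH big_ord_recr /= -/(HH a y N).
apply: le_trans (ler_normD _ _) _.
have [h0 h1] := andP (ha N).
have hd : 0 <= a N - a N.+1 by rewrite subr_ge0.
have -> : `|y| * (a 0%N - a N.+1) = `|y| * (a 0%N - a N) + (a N - a N.+1) * `|y|.
  by ring.
apply: lerD => //.
rewrite normrM ger0_norm // ler_wpM2l // normrX exprS.
by rewrite ler_piMr // exprn_ile1.
Qed.

Lemma ek (a : nat -> F) y N : 0 < a 0%N -> (forall j, 0 <= a j.+1 <= a j) -> `|y| < 1 ->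
  \sum_(j < N.+1) a j * y ^+ j != 0.
Proof.
move=> a0 ha hy.
have aN : 0 <= a N by case: (N) => [|k]; [exact: ltW | case/andP: (ha k)].
have aN0 : forall k, a k <= a 0%N.
  elim => [|k IH] //.
  by case/andP: (ha k) => _ h; apply: le_trans h IH.
apply/eqP => hF.
have := ek_ident a y N; rewrite hF mulr0 => /eqP; rewrite eq_sym subr_eq0 => /eqP E.
have hy' : `|y| <= 1 by apply: ltW.
have : `|a 0%N| <= `|y| * a 0%N.
  rewrite -[X in `|X| <= _](subrK (HH a y N)) E.
  apply: le_trans (ler_normD _ _) _.
  have -> : `|y| * a 0%N = a N * `|y| + `|y| * (a 0%N - a N) by ring.
  apply: lerD; last exact: ek_bound.
  rewrite normrM ger0_norm // ler_wpM2l // normrX exprS.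
  by rewrite ler_piMr // exprn_ile1.
rewrite ger0_norm; last exact: ltW.
move=> h.
have h2 : a 0%N * `|y| < a 0%N by rewrite -[X in _ < X]mulr1 ltr_pM2l.
by move: h; rewrite mulrC (lt_geF h2).
Qed.

End EK.

Section Anal.
Variable C : numClosedFieldType.

Lemma factor_ineq (z w : C) : `|z| <= 1 -> 1 <= `|w| -> z != 0 ->
  `|z| * `|(z^*)^-1 - w| <= `|z - w|.
Proof.
move=> hz hw z0.
have zc : z^* != 0 by rewrite conjC_eq0.
have -> : `|z| * `|(z^*)^-1 - w| = `|1 - z^* * w|.
  by rewrite -norm_conjC -normrM mulrBr divff.
have key : (z - w) * (z - w)^* =
   (1 - z^* * w) * (1 - z^* * w)^* + (1 - z * z^*) * (w * w^* - 1).
  by rewrite !rmorphB rmorphM rmorph1 /= conjCK; ring.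
rewrite -(ler_pXn2r (_ : 0 < 2)%N) ?nnegrE ?normr_ge0 //.
rewrite !normCK key lerDl -!normCK mulr_ge0 //.
  by rewrite subr_ge0 exprn_ile1.
by rewrite subr_ge0 exprn_ege1.
Qed.

Lemma prod_ineq (r : seq C) (z : C) : `|z| <= 1 -> z != 0 ->
  (forall w, w \in r -> 1 <= `|w|) ->
  `|z| ^+ size r * `|\prod_(w <- r) ((z^*)^-1 - w)| <= `|\prod_(w <- r) (z - w)|.
Proof.
move=> hz z0; elim: r => [|w r IH] hr.
  by rewrite !big_nil expr0 mul1r.
rewrite !big_cons /= !normrM exprS.
have -> : `|z| * `|z| ^+ size r * (`|(z^*)^-1 - w| * `|\prod_(j <- r) ((z^*)^-1 - j)|)
  = (`|z| * `|(z^*)^-1 - w|) * (`|z| ^+ size r * `|\prod_(j <- r) ((z^*)^-1 - j)|) by ring.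
apply: ler_pM.
- by rewrite mulr_ge0.
- by rewrite mulr_ge0 ?exprn_ge0.
- by apply: factor_ineq => //; apply: hr; rewrite in_cons eqxx.
- by apply: IH => v hv; apply: hr; rewrite in_cons hv orbT.
Qed.

Lemma unit_roots (s q : {poly C}) (n D : nat) :
  (size s <= n.+1)%N -> (n < D)%N ->
  (forall u, `|u| < 1 -> s.[u] != 0) ->
  (forall u, s.[u^*] = (s.[u])^*) ->
  (forall u, u != 0 -> q.[u] = u ^+ D * s.[u^-1]) ->
  forall z, z != 0 -> (s + q).[z] = 0 -> `|z| = 1.
Proof.
move=> ss nD hs hc hq.
have s0 : s != 0.
  have h0 : `|0 : C| < 1 by rewrite normr0 ltr01.
  by apply/eqP => E; move: (hs 0 h0); rewrite E horner0 eqxx.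
have [r sE] := closed_field_poly_normal s.
set lc := lead_coef s in sE.
have lc0 : lc != 0 by rewrite lead_coef_eq0.
have hd : (size r < D)%N.
  move: ss; rewrite sE size_scale // size_prod_XsubC => h; lia.
have hr : forall w, w \in r -> 1 <= `|w|.
  move=> w wr; rewrite real_leNgt ?real1 ?normr_real //; apply/negP => hw.
  have := hs w hw; rewrite sE hornerZ.
  have : root (\prod_(a <- r) ('X - a%:P)) w by rewrite root_prod_XsubC.
  by move/rootP => ->; rewrite mulr0 eqxx.
have sv : forall v, s.[v] = lc * \prod_(w <- r) (v - w).
  by move=> v; rewrite {1}sE hornerZ horner_prod; under eq_bigr do rewrite hornerXsubC.
have A : forall u, u != 0 -> `|u| < 1 -> `|q.[u]| < `|s.[u]|.
  move=> u u0 hu.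
  have su0 : 0 < `|s.[u]| by rewrite normr_gt0 hs.
  have e1 : `|s.[u^-1]| = `|s.[(u^*)^-1]|.
    by rewrite -fmorphV hc norm_conjC.
  have hu' : `|u| <= 1 by apply: ltW.
  have i1 : `|u| ^+ size r * `|s.[(u^*)^-1]| <= `|s.[u]|.
    rewrite !sv !normrM mulrCA ler_wpM2l ?normr_ge0 //.
    exact: prod_ineq.
  rewrite hq // normrM e1 normrX.
  have -> : D = ((D - size r) + size r)%N by rewrite subnK // ltnW.
  rewrite exprD -mulrA.
  apply: (le_lt_trans (ler_wpM2l (exprn_ge0 _ (normr_ge0 _)) i1)).
  rewrite -[X in _ < X]mul1r ltr_pM2r //.
  by rewrite exprn_ilt1 ?normr_ge0 // subn_eq0 -ltnNge.
move=> z z0 hz.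
have nz0 : forall u, u != 0 -> `|u| < 1 -> (s + q).[u] != 0.
  move=> u u0 hu; rewrite hornerD; apply/eqP => E.
  have := A u u0 hu; rewrite (_ : q.[u] = - s.[u]).
    by rewrite normrN ltxx.
  by apply/eqP; rewrite -addr_eq0 addrC E.
case: (real_ltgtP (normr_real z) (real1 C)) => // h.
  by move: (nz0 z z0 h); rewrite hz eqxx.
have zi0 : z^-1 != 0 by rewrite invr_eq0.
have hzi : `|z^-1| < 1.
  rewrite normrV ?unitfE // invf_lt1 //.
  exact: lt_trans ltr01 h.
have := nz0 _ zi0 hzi.
rewrite hornerD hq // invrK.
move: hz; rewrite hornerD hq // => hz.
have -> : s.[z^-1] + z^-1 ^+ D * s.[z] = z^-1 ^+ D * (s.[z] + z ^+ D * s.[z^-1]).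
  rewrite mulrDr mulrA -exprMn mulVf // expr1n mul1r addrC //.
by rewrite hz mulr0 eqxx.
Qed.

End Anal.

Section Glue.
Variable R : realType.
Notation C := (R[i]).
Definition cf (nu j : nat) : C := ((nu%:R ^+ j * (j`!)%:R)^-1).

Lemma s_polyE n nu : s_poly R n nu =
  \sum_(j < (n %/ nu).+1) (((-1) ^+ j * cf nu j) *: 'X^(nu * j)).
Proof.
apply eq_bigr => j _.
rewrite -mul_polyC polyCM rmorphXn rmorphN1 exprM exprNn /cf; ring.
Qed.

Lemma s_horner n nu u : (s_poly R n nu).[u] =
  \sum_(j < (n %/ nu).+1) cf nu j * (- u ^+ nu) ^+ j.
Proof.
rewrite s_polyE horner_sum; apply: eq_bigr => j _.
rewrite hornerZ hornerXn exprM [in RHS]exprNn.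
by rewrite -mulrA mulrCA.
Qed.

Lemma cf_nat nu j : cf nu j = ((nu ^ j * j`!)%:R)^-1.
Proof. by rewrite /cf natrM natrX. Qed.

Lemma s_conj n nu u : (s_poly R n nu).[u^*] = ((s_poly R n nu).[u])^*.
Proof.
rewrite !s_horner rmorph_sum; apply: eq_bigr => j _.
rewrite rmorphM rmorphXn rmorphN rmorphXn cf_nat fmorphV rmorph_nat //.
Qed.

Lemma s_coef_hi n nu k : (0 < nu)%N -> (n < k)%N -> (s_poly R n nu)`_k = 0.
Proof.
move=> nu0 nk; rewrite s_polyE coef_sum big1 // => j _.
rewrite coefZ coefXn.
have : (nu * j <= n)%N.
  have := ltn_ord j; rewrite ltnS => hj.
  apply: leq_trans (leq_mul (leqnn nu) hj) _.
  by rewrite mulnC leq_trunc_div.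
by move=> h; case: eqP => [E|]; [ lia | rewrite mulr0 ].
Qed.

Lemma s_size n nu : (0 < nu)%N -> (size (s_poly R n nu) <= n.+1)%N.
Proof.
by move=> nu0; apply/leq_sizeP => j hj; apply: s_coef_hi.
Qed.

Lemma coef_recip (D : nat) (p : {poly C}) k : (size p <= D.+1)%N -> (k <= D)%N ->
  (recip_poly D p)`_k = p`_(D - k).
Proof.
move=> sp kD; rewrite /recip_poly coef_sum.
rewrite (eq_bigr (fun j : 'I_(size p) => if (j : nat) == (D - k)%N then p`_j else 0)).
  rewrite -big_mkcond /= big_ord1_eq; case: ifP => // h.
  by rewrite nth_default // leqNgt h.
move=> j _; rewrite coefZ coefXn.
have hj := ltn_ord j.
have -> : (k == D - j)%N = ((j : nat) == D - k)%N.
  apply/eqP/eqP; lia.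
by case: eqP => [->|]; rewrite ?mulr1 ?mulr0.
Qed.

Lemma rev_prod (L : seq C) i :
  (\prod_(w <- L) (1 - w *: 'X))`_i =
  if (i <= size L)%N then (\prod_(w <- L) ('X - w%:P))`_(size L - i) else 0.
Proof.
elim: L i => [|w L IH] i.
  by rewrite !big_nil /= !coef1; case: i.
rewrite !big_cons /=.
set Q := \prod_(_ <- _) _; set P := \prod_(_ <- _) _.
have sP : size P = (size L).+1 by rewrite size_prod_XsubC.
rewrite mulrBl mul1r coefB -scalerAl coefZ coefXM.
rewrite mulrBl coefB coefXM coefCM.
rewrite !IH.
case: i => [|i] /=.
  rewrite subn0 /= [P`_(size L).+1]nth_default ?sP // mulr0 ?subr0.
rewrite -/P ltnS subSS; case: (ltngtP i (size L)) => h.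
- rewrite /=.
  have -> : (size L - i = (size L - i.+1).+1)%N by lia.
  by [].
- by rewrite mulr0 subr0.
- by rewrite h subnn.
Qed.

Definition G (n : nat) (z : C) : {poly C} := \sum_(1 <= m < n.+1) (z ^+ m) *: 'X^m.

Lemma geomG n z : (1 - z *: 'X) * G n z = z *: 'X - z ^+ n.+1 *: 'X^(n.+1).
Proof.
elim: n => [|n IH].
  by rewrite /G big_geq // mulr0 expr1 subrr.
rewrite /G big_nat_recr //= mulrDr -/(G n z) IH.
rewrite -!mul_polyC [z ^+ n.+2]exprS ['X^(n.+2)]exprS polyCM; ring.
Qed.

Lemma newton (L : seq C) n i : (i < n.+1)%N ->
  ('X * (\prod_(w <- L) (1 - w *: 'X))^`() +
   (\prod_(w <- L) (1 - w *: 'X)) * \sum_(w <- L) G n w)`_i = 0.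
Proof.
elim: L i => [|w L IH] i hi.
  by rewrite !big_nil derivC mulr0 mul1r add0r coef0.
rewrite !big_cons.
set Q := \prod_(_ <- _) _; set S := \sum_(_ <- _) _.
have dw : (1 - w *: 'X : {poly C})^`() = - w%:P.
  by rewrite derivB derivC derivZ derivX sub0r alg_polyC.
have -> : 'X * ((1 - w *: 'X) * Q)^`() + (1 - w *: 'X) * Q * (G n w + S) =
   (1 - w *: 'X) * ('X * Q^`() + Q * S) - w ^+ n.+1 *: ('X^(n.+1) * Q).
  rewrite derivM dw.
  have E : (1 - w *: 'X) * Q * (G n w + S) =
     (1 - w *: 'X) * Q * S + Q * ((1 - w *: 'X) * G n w) by ring.
  rewrite E geomG -!mul_polyC; ring.
rewrite coefB coefZ coefXnM hi mulr0 subr0 coefM big1 // => j _.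
by rewrite IH ?mulr0 //; apply: leq_ltn_trans (leq_subr _ _) hi.
Qed.


Lemma Xderiv_Xn k : 'X * ('X^k)^`() = k%:R *: ('X^k : {poly C}).
Proof.
case: k => [|k]; first by rewrite derivXn mulr0n mulr0 scale0r.
by rewrite derivXn mulrnAr -exprS scaler_nat.
Qed.

Lemma cf_rel nu j : (0 < nu)%N ->
  (-1) ^+ j.+1 * cf nu j.+1 * (nu * j.+1)%:R + (-1) ^+ j * cf nu j = 0.
Proof.
move=> nu0; rewrite /cf factS !natrM !exprS.
have h1 : (nu%:R : C) != 0 by rewrite pnatr_eq0 -lt0n.
have h2 : (j.+1%:R : C) != 0 by rewrite pnatr_eq0.
have h3 : ((j`!)%:R : C) != 0 by rewrite pnatr_eq0 -lt0n fact_gt0.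
have h4 : (nu%:R ^+ j : C) != 0 by rewrite expf_neq0.
move: h4; set a := (-1) ^+ j; set b := (nu%:R ^+ j : C) => h4.
clearbody a b. field. by rewrite h1 h3 h4 addrC natr1 h2.
Qed.

Lemma aux_lin (a b : C) (k : nat) (A B : {poly C}) : a * k%:R + b = 0 ->
  a%:P * (k%:R%:P * (A * B)) + b%:P * A * B = 0.
Proof.
move=> h.
have -> : a%:P * (k%:R%:P * (A * B)) + b%:P * A * B = (a * k%:R + b)%:P * (A * B).
  by rewrite polyCD polyCM; ring.
by rewrite h mul0r.
Qed.

Lemma s_ident n nu : (0 < nu)%N ->
 'X * (s_poly R n nu)^`() + s_poly R n nu * 'X^nu =
   ((-1) ^+ (n %/ nu) * cf nu (n %/ nu)) *: 'X^(nu * (n %/ nu).+1).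
Proof.
move=> nu0; rewrite s_polyE raddf_sum mulr_sumr mulr_suml.
set N := (n %/ nu)%N.
rewrite big_ord_recl /=.
rewrite [X in X + _ + _](_ : _ = 0) ?add0r; last first.
  by rewrite muln0 expr0 derivZ derivC scaler0 mulr0.
rewrite big_ord_recr /= addrA -big_split /= big1 ?add0r.
  rewrite -scalerAl; congr (_ *: _); by rewrite mulnS addnC exprD.
move=> j _; rewrite derivZ -scalerAr Xderiv_Xn /bump /= add1n.
have -> : (nu * j.+1 = nu * j + nu)%N by rewrite mulnS addnC.
rewrite exprD -!mul_polyC.
apply: aux_lin.
by rewrite -[(nu * j + nu)%N]addnC -mulnS cf_rel.
Qed.


Lemma s_coef0 n nu : (0 < nu)%N -> (s_poly R n nu)`_0 = 1.
Proof.
move=> nu0; rewrite s_polyE coef_sum big_ord_recl /= big1.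
  by rewrite coefZ coefXn muln0 eqxx mulr1 expr0 mul1r /cf expr0 mul1r invr1 addr0.
move=> j _; rewrite coefZ coefXn /bump /=.
by case: eqP => [E|]; [ lia | rewrite mulr0 ].
Qed.

Lemma coefG n w m : (0 < m <= n)%N -> (G n w)`_m = w ^+ m.
Proof.
move=> hm; rewrite /G coef_sum.
rewrite (eq_bigr (fun j => if j == m then w ^+ j else 0)); last first.
  by move=> j _; rewrite coefZ coefXn eq_sym; case: eqP; rewrite ?mulr1 ?mulr0.
by rewrite -big_mkcond big_nat1_eq ltnS hm.
Qed.

Lemma power_sums n nu (L : seq C) : (0 < nu)%N -> (nu <= n)%N ->
  (forall i, (i <= n)%N -> (\prod_(w <- L) (1 - w *: 'X))`_i = (s_poly R n nu)`_i) ->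
  forall m, (0 < m <= n)%N -> \sum_(w <- L) w ^+ m = (m == nu)%:R.
Proof.
move=> nu0 nun hQ.
have hN := newton L n.
set Q := \prod_(w <- L) (1 - w *: 'X) in hQ hN.
set S := \sum_(w <- L) G n w in hN.
set s := s_poly R n nu in hQ *.
have hs : forall i, (i < n.+1)%N -> ('X * s^`() + s * 'X^nu)`_i = 0.
  move=> i hi; rewrite /s s_ident // coefZ coefXn.
  have := ltn_ceil n nu0.
  by case: eqP => [E|]; [ rewrite mulnC; lia | rewrite mulr0 ].
have hT : forall i, (i < n.+1)%N -> (s * (S - 'X^nu))`_i = 0.
  move=> i hi; rewrite mulrBr coefB.
  have e1 := hN i hi; have e2 := hs i hi.
  rewrite coefD in e1; rewrite coefD in e2.
  have x1 : ('X * Q^`())`_i = ('X * s^`())`_i.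
    rewrite !coefXM; case: i hi {e1 e2} => [|i] hi //=.
    by rewrite !coef_deriv hQ.
  have x2 : (Q * S)`_i = (s * S)`_i.
    rewrite !coefM; apply: eq_bigr => j _; rewrite hQ //.
    by have := ltn_ord j; lia.
  rewrite x1 x2 in e1.
  move/eqP: e1; rewrite addr_eq0 => /eqP e1.
  move/eqP: e2; rewrite addr_eq0 => /eqP e2.
  by rewrite e1 in e2; rewrite (oppr_inj e2) subrr.
have hT0 : forall i, (i < n.+1)%N -> (S - 'X^nu)`_i = 0.
  elim/ltn_ind => i IH hi.
  have := hT i hi; rewrite coefMr big_ord_recr /= subnn /s s_coef0 // mul1r.
  rewrite big1 ?add0r // => j _; rewrite IH ?mulr0 //.
  by apply: ltn_trans hi.
move=> m hm.
have := hT0 m; rewrite coefB coefXn /S coef_sum.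
rewrite (eq_bigr (fun w => w ^+ m)); last by move=> w _; rewrite coefG.
by move=> h; apply/eqP; rewrite -subr_eq0 h //; lia.
Qed.


Lemma s_nonzero n nu u : (0 < nu)%N -> `|u| < 1 -> (s_poly R n nu).[u] != 0.
Proof.
move=> nu0 hu; rewrite s_horner; apply: ek.
- by rewrite cf_nat expn0 fact0 invr_gt0 ltr0n.
- move=> j; rewrite !cf_nat invr_ge0 ler0n /=.
  rewrite lef_pV2 ?posrE ?ltr0n ?muln_gt0 ?expn_gt0 ?nu0 ?fact_gt0 // ler_nat.
  rewrite expnS factS.
  by apply: leq_mul; apply: leq_pmull.
- by rewrite normrN normrX exprn_ilt1 ?normr_ge0 // -lt0n.
Qed.

Lemma recip_horner D (p : {poly C}) u : (size p <= D.+1)%N -> u != 0 ->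
  (recip_poly D p).[u] = u ^+ D * p.[u^-1].
Proof.
move=> sp u0; rewrite /recip_poly horner_sum (horner_coef p) mulr_sumr.
apply: eq_bigr => i _.
rewrite hornerZ hornerXn exprVn mulrCA; congr (_ * _).
have hi : (i <= D)%N by have := ltn_ord i; lia.
have -> : u ^+ D = u ^+ (D - i) * u ^+ i by rewrite -exprD subnK.
by rewrite mulfK // expf_neq0.
Qed.

Lemma Q_coef n nu (L : seq C) : (0 < nu)%N -> size L = (2 * n).+1 ->
  key_poly R n nu = \prod_(w <- L) ('X - w%:P) ->
  forall i, (i <= n)%N -> (\prod_(w <- L) (1 - w *: 'X))`_i = (s_poly R n nu)`_i.
Proof.
move=> nu0 sL hk i hi; rewrite rev_prod sL.
have -> : (i <= (2 * n).+1)%N by lia.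
rewrite -hk /key_poly coefD [(s_poly R n nu)`_(_ - i)]s_coef_hi //; last by lia.
rewrite add0r coef_recip; last by lia.
  by rewrite subKn //; lia.
by apply: leq_trans (@s_size n nu nu0) _; lia.
Qed.

Lemma roots_unit n nu (L : seq C) : (0 < nu)%N -> key_poly R n nu = \prod_(w <- L) ('X - w%:P) ->
  forall w, w \in L -> w != 0 -> `|w| = 1.
Proof.
move=> nu0 hk w wL w0.
apply: (@unit_roots _ (s_poly R n nu) (recip_poly (2 * n).+1 (s_poly R n nu)) n (2 * n).+1) => //.
- exact: s_size.
- by lia.
- by move=> u hu; apply: s_nonzero.
- by move=> u; apply: s_conj.
- move=> u u0; apply: recip_horner => //.
  by apply: leq_trans (@s_size n nu nu0) _; lia.
- apply/rootP; rewrite -/(key_poly R n nu) hk root_prod_XsubC //.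
Qed.

Local Open Scope complex_scope.

Lemma moivre (t : R) m : (cos t +i* sin t) ^+ m = cos (m%:R * t) +i* sin (m%:R * t).
Proof.
elim: m => [|m IH]; first by rewrite expr0 mul0r cos0 sin0.
rewrite exprS IH.
have -> : (m.+1)%:R * t = t + m%:R * t by rewrite -add1n natrD mulrDl mul1r.
rewrite cosD sinD.
change ((cos t * cos (m%:R * t) - sin t * sin (m%:R * t)) +i* (cos t * sin (m%:R * t) + sin t * cos (m%:R * t)) =
  (cos t * cos (m%:R * t) - sin t * sin (m%:R * t)) +i* (sin t * cos (m%:R * t) + cos t * sin (m%:R * t))).
by congr (_ +i* _); rewrite addrC.
Qed.

Lemma Re_sum (I : Type) (r : seq I) (F : I -> C) :
  complex.Re (\sum_(i <- r) F i) = \sum_(i <- r) complex.Re (F i).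
Proof.
elim: r => [|x r IH]; first by rewrite !big_nil.
by rewrite !big_cons -IH; case: (F x) => a b; case: (\sum_(i <- r) F i).
Qed.

Lemma Im_sum (I : Type) (r : seq I) (F : I -> C) :
  complex.Im (\sum_(i <- r) F i) = \sum_(i <- r) complex.Im (F i).
Proof.
elim: r => [|x r IH]; first by rewrite !big_nil.
by rewrite !big_cons -IH; case: (F x) => a b; case: (\sum_(i <- r) F i).
Qed.

End Glue.

Local Open Scope complex_scope.

Theorem corollary2p2 (R : realType) (n : nat) (a b : nat -> R) (nu : nat)
  (z : 'I_(2 * n).+1 -> R[i]) (t : 'I_(2 * n).+1 -> R) :
  (2 <= n)%N -> (1 <= nu <= n)%N ->
  key_poly R n nu = \prod_(k < (2 * n).+1) ('X - (z k)%:P) ->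
  (forall k, 0 <= t k < 2 * pi /\
     exists r : R, 0 < r /\ z k = (r * cos (t k)) +i* (r * sin (t k))) ->
  a nu = \sum_(k < (2 * n).+1) trigpoly n a b (- t k) /\
  b nu = \sum_(k < (2 * n).+1) trigpoly n a b (pi / (2 * nu%:R) - t k).
Proof.
move=> n2 /andP [nu0 nun] hk ht.
set D := (2 * n).+1.
set L := map z (enum 'I_D).
have sL : size L = D by rewrite size_map size_enum_ord.
have hkL : key_poly R n nu = \prod_(w <- L) ('X - w%:P).
  by rewrite big_map big_enum /= hk.
have PS : forall m, (0 < m <= n)%N -> \sum_(k < D) z k ^+ m = (m == nu)%:R.
  move=> m hm.
  have := @power_sums R n nu L nu0 nun (@Q_coef R n nu L nu0 sL hkL) m hm.
  by rewrite big_map big_enum.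
have U : forall k, z k = cos (t k) +i* sin (t k).
  move=> k; have [_ [r [r0 zk]]] := ht k.
  have hn : `|z k| = r%:C.
    rewrite zk normc_def /= !exprMn -mulrDr.
    by rewrite cos2Dsin2 mulr1 sqrtr_sqr gtr0_norm.
  have zk0 : z k != 0.
    apply/eqP => E; move: hn; rewrite E normr0 => -[] h.
    by move: r0; rewrite -h ltxx.
  have := @roots_unit R n nu L nu0 hkL _ (map_f z (mem_enum _ k)) zk0.
  rewrite hn => -[] r1.
  by rewrite zk r1 !mul1r.
have hc : forall m, (0 < m <= n)%N -> \sum_(k < D) cos (m%:R * t k) = (m == nu)%:R.
  move=> m hm; have := congr1 (@complex.Re R) (PS m hm).
  rewrite Re_sum; under eq_bigr do rewrite U moivre.
  by case: (m == nu).
have hs : forall m, (0 < m <= n)%N -> \sum_(k < D) sin (m%:R * t k) = 0.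
  move=> m hm; have := congr1 (@complex.Im R) (PS m hm).
  rewrite Im_sum; under eq_bigr do rewrite U moivre.
  by case: (m == nu).
have nuR : (nu%:R : R) != 0 by rewrite pnatr_eq0 -lt0n.
split.
  rewrite /trigpoly exchange_big /=.
  rewrite (eq_big_nat _ _ (F2 := fun m => if m == nu then a m else 0)).
    by rewrite -big_mkcond big_nat1_eq /= ltnS nu0 nun.
  move=> m hm.
  rewrite big_split /= -!mulr_sumr.
  rewrite (eq_bigr (fun k => cos (m%:R * t k))); last by move=> k _; rewrite mulrN cosN.
  rewrite [X in b m * X](eq_bigr (fun k => - sin (m%:R * t k))); last by move=> k _; rewrite mulrN sinN.
  rewrite sumrN hc // hs // oppr0 mulr0 addr0.
  by case: eqP; rewrite ?mulr1 ?mulr0.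
rewrite /trigpoly exchange_big /=.
rewrite (eq_big_nat _ _ (F2 := fun m => if m == nu then b m else 0)).
  by rewrite -big_mkcond big_nat1_eq /= ltnS nu0 nun.
move=> m hm.
rewrite big_split /= -!mulr_sumr.
pose c : R := m%:R * (pi / (2 * nu%:R)).
rewrite (eq_bigr (fun k => cos c * cos (m%:R * t k) + sin c * sin (m%:R * t k)));
  last by move=> k _; rewrite mulrBr cosB.
rewrite [X in b m * X](eq_bigr (fun k => sin c * cos (m%:R * t k) - cos c * sin (m%:R * t k)));
  last by move=> k _; rewrite mulrBr sinB.
rewrite big_split sumrB /= -!mulr_sumr hc // hs //.
case: eqP => [E|_]; last by rewrite /= !(mulr0, addr0, subr0).
rewrite /= !(mulr0, addr0, subr0, mulr1).
have -> : c = pi / 2 by rewrite /c E; field.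
by rewrite cos_pihalf sin_pihalf mulr0 mulr1 add0r E.
Qed.
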